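(* Let $T=(\mathcal V,E,r)$ be a tree whose vertices are distinct points of a metric space $(X,d)$, and give each edge $e=(v,v')$ length $L_e=d(v,v')$. Sort the edges as $e_1,\dots,e_{|\mathcal V|-1}$ in nondecreasing order of length, and assign ranks: $e_1$ has rank 1, and for $t\ge2$, $e_t$ has the rank of $e_{t-1}$ if $L_{e_t}\le2\sum_{s=1}^{t-1}L_{e_s}$, and the rank of $e_{t-1}$ plus 1 otherwise. Then for any two edges $e,e'$ of the same rank, $L_e/L_{e'}\le3^{|\mathcal V|-1}$. *)

(* Defs.v *)
From mathcomp Require Import all_boot all_order all_algebra.
Set Implicit Arguments. Unset Strict Implicit. Unset Printing Implicit Defensive.
Import Order.TTheory GRing.Theory Num.Theory.
Local Open Scope ring_scope.

Definition is_metric (R : realFieldType) (X : Type) (d : X -> X -> R) : Prop :=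
  [/\ (forall x y, 0 <= d x y),
      (forall x y, d x y = 0 <-> x = y),
      (forall x y, d x y = d y x) &
      (forall x y z, d x z <= d x y + d y z)].

Definition edge_rel (V : finType) (E : seq (V * V)) : rel V :=
  fun x y => ((x, y) \in E) || ((y, x) \in E).

Definition is_rooted_tree (V : finType) (E : seq (V * V)) (r : V) : Prop :=
  [/\ all (fun e => e.1 != e.2) E,
      size E = #|V|.-1 &
      (forall x y : V, connect (edge_rel E) x y)].

Definition edge_len (R : realFieldType) (X : Type) (d : X -> X -> R)
  (V : finType) (p : V -> X) (e : V * V) : R := d (p e.1) (p e.2).

(* rank of the t-th (0-indexed) element of the sorted length list ls:
   rank 0 = 1 ; rank (t+1) = rank t if ls_(t+1) <= 2 * sum_(s <= t) ls_s,
   and rank t + 1 otherwise. *)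
Fixpoint rank (R : realFieldType) (ls : seq R) (t : nat) : nat :=
  match t with
  | 0 => 1%N
  | t'.+1 => if ls`_t <= 2 * \sum_(0 <= s < t) ls`_s then rank ls t'
             else (rank ls t').+1
  end.

(* Main.v *)
Require Import Defs.
From mathcomp Require Import all_boot all_order all_algebra.
From mathcomp Require Import ring lra.
Import Order.TTheory GRing.Theory Num.Theory.
Local Open Scope ring_scope.

Section L.
Variable R : realFieldType.
Variable ls : seq R.
Hypothesis hnn : forall k, 0 <= ls`_k.
Let S k := \sum_(0 <= s < k) ls`_s.

Lemma rank_mono t : (rank ls t <= rank ls t.+1)%N.
Proof. by rewrite /=; case: ifP. Qed.

Lemma rank_monok j k : (rank ls j <= rank ls (j + k))%N.
Proof.
elim: k => [|k IH]; first by rewrite addn0.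
by rewrite addnS (leq_trans IH (rank_mono _)).
Qed.

Lemma S_ge0 k : 0 <= S k.
Proof. by apply: sumr_ge0 => i _. Qed.

Lemma growth j k : rank ls j = rank ls (j + k) -> S (j + k).+1 <= 3 ^+ k * S j.+1.
Proof.
elim: k => [|k IH] H; first by rewrite addn0 expr0 mul1r.
have H1 : rank ls (j + k) = rank ls j.
  apply/eqP; rewrite eqn_leq rank_monok andbT.
  by have := rank_mono (j + k); rewrite -addnS -H.
have := IH (esym H1) => {}IH.
have Hc : ls`_(j + k).+1 <= 2 * S (j + k).+1.
  move: H; rewrite addnS /=; case: ifP => // _ H.
  by move: H; rewrite H1 => /eqP; rewrite -[X in X == _]addn0 -[X in _ == X]addn1 eqn_add2l.
rewrite /S big_nat_recr //= -/(S (j+k).+1) addnS exprS.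
rewrite -mulrA; apply: (le_trans (_ : _ <= 3 * S (j + k).+1)).
  by rewrite /S in Hc *; lra.
by rewrite ler_pM2l.
Qed.

Lemma S_sorted j : sorted (fun a b => a <= b) ls -> (j < size ls)%N ->
  S j.+1 <= j.+1%:R * ls`_j.
Proof.
move=> hs hj; rewrite /S.
apply: (le_trans (_ : _ <= \sum_(0 <= s < j.+1) ls`_j)).
  rewrite big_nat_cond [X in _ <= X]big_nat_cond; apply: ler_sum => k /andP[/andP[_ hk] _].
  apply: (sorted_leq_nth le_trans lexx) => //.
  by rewrite inE (leq_ltn_trans _ hj) // -ltnS.
by rewrite sumr_const_nat subn0 mulr_natl.
Qed.

End L.

Theorem claim3 (R : realFieldType) (X : Type) (d : X -> X -> R)
  (V : finType) (p : V -> X) (E : seq (V * V)) (r : V)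
  (hd : is_metric d) (hp : injective p) (hT : is_rooted_tree E r)
  (s : seq (V * V))
  (hperm : perm_eq s E)
  (hsort : sorted (fun a b => a <= b) (map (edge_len d p) s)) :
  forall i j : nat, (i < size s)%N -> (j < size s)%N ->
    rank (map (edge_len d p) s) i = rank (map (edge_len d p) s) j ->
    edge_len d p (nth (r, r) s i) / edge_len d p (nth (r, r) s j)
      <= 3 ^+ (#|V|.-1).
Proof.
move=> i j hi hj hr.
have hN : size s = #|V|.-1.
  by case: hT => _ <- _; apply: perm_size.
rewrite -hN -!(nth_map (r, r) 0) //.
set l := map _ s.
have hsz : size l = size s by rewrite size_map.
have hnn : forall k, 0 <= l`_k.
  move=> k; case: (ltnP k (size s)) => hk.
    by rewrite (nth_map (r, r)) //; case: hd => H _ _ _; apply: H.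
  by rewrite nth_default // hsz.
case: (eqVneq l`_j 0) => [->|nz].
  by rewrite invr0 mulr0 exprn_ge0.
have lpos : 0 < l`_j by rewrite lt_def nz hnn.
rewrite ler_pdivrMr //.
case: (ltnP j i) => hji.
- have := @growth R l j (i - j).
  rewrite subnKC ?(ltnW hji) // => /(_ (esym hr)) hg.
  have hs := @S_sorted R l j hsort ltac:(by rewrite hsz).
  have hli : l`_i <= \sum_(0 <= s < i.+1) l`_s.
    by rewrite big_nat_recr //= lerDr; apply: sumr_ge0.
  have h3 : j.+1%:R <= 3 ^+ j :> R.
    by rewrite -natrX ler_nat ltn_expl.
  apply: (le_trans hli); apply: (le_trans hg).
  apply: (le_trans (_ : _ <= 3 ^+ (i - j) * (3 ^+ j * l`_j))).
    rewrite ler_pM2l ?exprn_gt0 //; apply: (le_trans hs).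
    by rewrite ler_pM2r.
  rewrite mulrA -exprD subnK ?(ltnW hji) // ler_pM2r //.
  have h13 : (1:R) < 3 by lra.
  by rewrite (ler_eXn2l h13) ltnW.
- have := sorted_leq_nth le_trans lexx 0 hsort.
  move=> /(_ i j); rewrite !inE hsz => /(_ hi hj hji) hij.
  apply: (le_trans hij); rewrite ler_peMl //.
  by rewrite exprn_ege1 //; lra.
Qed.
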